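(* Let $n\ge2$ and $1\le m\le n-1$ be integers and let $\alpha$ be real with $m<\alpha<m(n-m)$. Then for primes $p$ there exists a subset $G\subset G(n,n-m)$ such that $|G|\approx p^{\alpha}$ and for every $\xi\in\mathbb{F}_p^n\setminus\{0\}$, \[ |\{W\in G:\ \xi\in W\}|\lesssim |G|\,p^{-m}. \]
   Context: $\mathbb{F}_p$ is the field with $p$ elements and $G(n,k)$ is the set of all $k$-dimensional linear subspaces of $\mathbb{F}_p^n$. $|J|$ denotes cardinality. $f\lesssim g$ means $f\le Cg$ with $C$ independent of $p$ and $\xi$; $f\approx g$ means $f\lesssim g$ and $g\lesssim f$. *)

(* Defs.v *)
From mathcomp Require Import all_boot all_algebra.
From Stdlib Require Import Reals.
Set Implicit Arguments. Unset Strict Implicit. Unset Printing Implicit Defensive.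

Definition in_Grassmannian (p n k : nat) (W : {vspace 'rV['F_p]_n}) : bool :=
  \dim W == k.

Definition is_subset_Grassmannian (p n k : nat) (G : seq {vspace 'rV['F_p]_n}) : bool :=
  uniq G && all (@in_Grassmannian p n k) G.

Definition count_containing (p n : nat) (G : seq {vspace 'rV['F_p]_n})
  (xi : 'rV['F_p]_n) : nat := count (fun W : {vspace 'rV['F_p]_n} => xi \in W) G.

(* Main.v *)
Require Import Defs.
From mathcomp Require Import all_boot all_algebra.
From Stdlib Require Import Reals.
From Stdlib Require Import Lra Lia Znat.
Set Implicit Arguments. Unset Strict Implicit. Unset Printing Implicit Defensive.
Import GRing.Theory.
Local Open Scope ring_scope.

Definition Wsp (F : fieldType) k m (A : 'M[F]_(k,m)) : {vspace 'rV[F]_(k+m)} :=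
  limg (linfun (mulmxr (row_mx 1%:M A))).

Lemma memWsp (F : fieldType) k m (A : 'M[F]_(k,m)) (xi : 'rV[F]_(k+m)) :
  (xi \in Wsp A) = (rsubmx xi == lsubmx xi *m A).
Proof.
apply/memv_imgP/eqP => [[x _ ->]|h].
  by rewrite lfunE /= mul_mx_row mulmx1 row_mxKl row_mxKr.
exists (lsubmx xi); first exact: memvf.
by rewrite lfunE /= mul_mx_row mulmx1 -h hsubmxK.
Qed.

Lemma dimWsp (F : fieldType) k m (A : 'M[F]_(k,m)) : \dim (Wsp A) = k.
Proof.
have h0 : lker (linfun (@mulmxr F 1 k (k+m) (row_mx 1%:M A))) = 0%VS.
  apply/eqP/lker0P => x y; rewrite !lfunE /= !mul_mx_row !mulmx1.
  by case/eq_row_mx.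
by rewrite /Wsp limg_dim_eq ?h0 ?capv0 // dimvf /dim /= mul1n.
Qed.

Lemma Wsp_inj (F : fieldType) k m : injective (@Wsp F k m).
Proof.
move=> A B h; apply/(row_matrixP A B) => i.
have := memWsp A (row_mx (delta_mx 0 i) (delta_mx 0 i *m A)).
rewrite h memWsp row_mxKl row_mxKr eqxx => /eqP e.
by rewrite !rowE e.
Qed.

Lemma count_enumT (T : finType) (a : pred T) : count a (enum T) = #|a|.
Proof. by rewrite cardE -size_filter /enum_mem filter_predT. Qed.

Definition Gam (F : fieldType) k' m (t : {ffun 'I_m -> F}) : 'M[F]_(k'.+1, m) :=
  \matrix_(i, j) (t j) ^+ i.+1.

Definition Dm (F : fieldType) k' m (B : 'M[F]_(k', m)) : 'M[F]_(k'.+1, m) :=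
  col_mx (0 : 'M_(1, m)) B.

Arguments Gam {F k' m} t.

Lemma Dm0 (F : fieldType) k' m (B : 'M[F]_(k', m)) j : Dm B ord0 j = 0.
Proof.
rewrite /Dm (_ : ord0 = lshift k' (ord0 : 'I_1)); last exact: val_inj.
by rewrite (col_mxEu (0 : 'M[F]_(1,m)) B ord0 j) mxE.
Qed.

Definition Alist (F : finFieldType) k' m (Y : seq 'M[F]_(k', m)) :=
  [seq Gam t + Dm B | B <- Y, t <- enum {ffun 'I_m -> F}].

Lemma Alist_uniq (F : finFieldType) k' m (Y : seq 'M[F]_(k', m)) :
  uniq Y -> uniq (Alist Y).
Proof.
move=> uY; apply: allpairs_uniq => //; first exact: enum_uniq.
move=> [B t] [B' t'] _ _ /= e.
have ett : t = t'.
  apply/ffunP => j.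
  have := congr1 (fun M : 'M[F]_(k'.+1, m) => M ord0 j) e.
  by rewrite /= ![((_ + _ : 'M[F]_(k'.+1,m)) ord0 j)]mxE ![Gam _ ord0 j]mxE !Dm0 !addr0 !expr1.
move: e; rewrite ett => /addrI e.
by case: (eq_col_mx (e : col_mx (0 : 'M[F]_(1,m)) B = col_mx 0 B')) => _ ->.
Qed.

Lemma Alist_size (F : finFieldType) k' m (Y : seq 'M[F]_(k', m)) :
  size (Alist Y) = (size Y * expn #|F| m)%nat.
Proof. by rewrite size_allpairs -cardE card_ffun card_ord. Qed.

Lemma foldr_muln_le (s : seq nat) b :
  all (fun x => x <= b)%nat s -> (foldr muln 1 s <= expn b (size s))%nat.
Proof.
elim: s => //= x s IH /andP [hx hs].
by rewrite expnS leq_mul // IH.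
Qed.

Lemma root_card (F : finFieldType) (P : {poly F}) n :
  P != 0 -> (size P <= n.+1)%nat -> (#|[pred x | root P x]| <= n)%nat.
Proof.
move=> nz hs; rewrite cardE -ltnS; apply: leq_trans hs.
apply: max_poly_roots nz _ (enum_uniq _).
by apply/allP => x; rewrite mem_enum.
Qed.

Lemma count_B (F : finFieldType) k' m (B : 'M[F]_(k', m)) (xi : 'rV[F]_(k'.+1 + m)) :
  xi != 0 ->
  (count (fun t => xi \in Wsp (Gam t + Dm B)) (enum {ffun 'I_m -> F}) <= expn k'.+1 m)%nat.
Proof.
move=> xnz; rewrite count_enumT.
set u := lsubmx xi; set v := rsubmx xi.
case: (eqVneq u 0) => [u0|unz].
  rewrite eq_card0 // => t; rewrite unfold_in /= memWsp -/u -/v u0 mul0mx.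
  apply/negbTE; apply: contra xnz => /eqP v0.
  by rewrite -(hsubmxK xi) -/u -/v u0 v0 row_mx0.
have [i0 ui0] : exists i, u 0 i != 0.
  case: (pickP (fun i => u 0 i != 0)) => [i ui|h]; first by exists i.
  move: unz; rewrite (_ : u = 0) ?eqxx //.
  by apply/matrixP => a i; rewrite [RHS]mxE (ord1 a); move: (h i) => /negbFE/eqP.
pose c j := \sum_i u 0 i * Dm B i j - v 0 j.
pose P j := \poly_(i < k'.+2) (if i is i'.+1 then u 0 (inord i') else c j).
pose R j := [pred x | root (P j) x].
apply: (@leq_trans #|finfun.family R|).
  apply: subset_leq_card.
  apply/subsetP => t; rewrite unfold_in /= unfold_in /= memWsp => /eqP h; apply/forallP => j.
  rewrite inE /root horner_poly big_ord_recl /= /c.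
  have -> : v 0 j = \sum_i u 0 i * (t j ^+ i.+1 + Dm B i j).
    by rewrite /v h mxE; apply: eq_bigr => i _; rewrite !mxE.
  under [X in _ + X]eq_bigr do rewrite add0n inord_val /bump add1n.
  rewrite expr0 mulr1.
  under [\sum_i u 0 i * (_ + _)]eq_bigr do rewrite mulrDr.
  have e : forall x y : F, x - (y + x) + y = 0.
    by move=> x y; rewrite (addrC y) opprD addrA subrr add0r addNr.
  by rewrite big_split /= e.
rewrite card_family; set s := [seq _ | x : _].
have -> : m = size s by rewrite size_map -cardE card_ord.
apply: foldr_muln_le; apply/allP => _ /mapP [j _ ->].
apply: root_card; last exact: size_poly.
apply/eqP => P0; move: ui0; apply/negP; rewrite negbK.
have := congr1 (fun q : {poly F} => q`_i0.+1) P0.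
by rewrite /= coef_poly coef0 ltnS ltn_ord inord_val => ->.
Qed.

Lemma Alist_count (F : finFieldType) k' m (Y : seq 'M[F]_(k', m)) (xi : 'rV[F]_(k'.+1 + m)) :
  xi != 0 -> (count (fun A => xi \in Wsp A) (Alist Y) <= size Y * expn k'.+1 m)%nat.
Proof.
move=> xnz; rewrite /Alist; elim: Y => //= B Y IH.
by rewrite count_cat count_map mulSn leq_add // count_B.
Qed.

Lemma core (F : finFieldType) k' m N : (N <= expn #|F| (k' * m))%nat ->
  exists G : seq {vspace 'rV[F]_(k'.+1 + m)},
    [/\ uniq G, all (fun W => \dim W == k'.+1) G, size G = (N * expn #|F| m)%nat &
     forall xi : 'rV[F]_(k'.+1 + m), xi != 0 -> (count (fun W : {vspace 'rV[F]_(k'.+1 + m)} => xi \in W) G <= N * expn k'.+1 m)%nat].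
Proof.
move=> hN; pose Y := take N (enum 'M[F]_(k', m)).
have sY : size Y = N by rewrite size_take -cardE card_mx; case: ltngtP hN.
exists (map (@Wsp F k'.+1 m) (Alist Y)); split.
- by rewrite map_inj_uniq ?Alist_uniq ?take_uniq ?enum_uniq //; apply: Wsp_inj.
- by apply/allP => _ /mapP [A _ ->]; rewrite dimWsp.
- by rewrite size_map Alist_size sY.
- by move=> xi xnz; rewrite count_map -sY; apply: Alist_count.
Qed.
Close Scope ring_scope.

Lemma expn_pow a b : expn a b = Nat.pow a b.
Proof. by elim: b => // b IH; rewrite expnS IH. Qed.


Lemma nat_floor (x : R) : (0 <= x)%R -> exists N : nat, (INR N <= x < INR N + 1)%R.
Proof.
move=> hx; have [h1 h2] := base_Int_part x.
have hz : (0 <= Int_part x)%Z.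
  have : (-1 < IZR (Int_part x))%R by lra.
  move/(lt_IZR (-1)) => /=; lia.
exists (Z.to_nat (Int_part x)).
rewrite INR_IZR_INZ Znat.Z2Nat.id //; lra.
Qed.

Lemma real_part (p : nat) (alpha : R) (m K D : nat) :
  (2 <= p)%nat -> (INR m < alpha)%R -> (alpha < INR m + INR D)%R ->
  exists N : nat, (N <= p ^ D)%nat /\
    (Rpower (INR p) alpha <= (2 + INR K) * INR (N * p ^ m))%R /\
    (INR (N * p ^ m) <= (2 + INR K) * Rpower (INR p) alpha)%R /\
    forall c : nat, (c <= N * K)%nat ->
      (INR c <= (2 + INR K) * INR (N * p ^ m) * Rpower (INR p) (- INR m))%R.
Proof.
move=> hp ha1 ha2.
have hp1 : (1 < INR p)%R.
  by apply: (lt_INR 1); apply/ltP.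
have hp0 : (0 < INR p)%R by lra.
have hK : (0 <= INR K)%R by apply: pos_INR.
set a := (alpha - INR m)%R.
set X := Rpower (INR p) a.
have hX1 : (1 <= X)%R.
  rewrite /X -(Rpower_O (INR p)) //; apply: Rlt_le; apply: Rpower_lt => //; rewrite /a; lra.
have hXD : (X < INR (p ^ D))%R.
  rewrite pow_INR -Rpower_pow //; apply: Rpower_lt => //; rewrite /a; lra.
have [N [hN1 hN2]] := nat_floor (Rle_trans _ _ _ Rle_0_1 hX1).
have hN0 : (1 <= INR N)%R.
  have : (0 < INR N)%R by lra.
  case: N {hN1 hN2} => [|N]; first by rewrite /=; lra.
  move=> _; rewrite S_INR; have := pos_INR N; lra.
set P := (INR p ^ m)%R.
have hP : (0 < P)%R by apply: pow_lt.
have hPa : Rpower (INR p) alpha = (X * P)%R.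
  by rewrite /X /P -Rpower_pow // -Rpower_plus /a; congr Rpower; lra.
exists N; split; [|split; [|split]].
- apply/leP/INR_le; lra.
- rewrite hPa mult_INR pow_INR -/P.
  have : (X <= (2 + INR K) * INR N)%R by nra.
  move=> h; nra.
- rewrite hPa mult_INR pow_INR -/P.
  have : (INR N <= (2 + INR K) * X)%R by nra.
  move=> h; nra.
- move=> c hc.
  rewrite Rpower_Ropp Rpower_pow // -/P mult_INR pow_INR -/P.
  have -> : ((2 + INR K) * (INR N * P) * / P = (2 + INR K) * INR N)%R.
    by field; lra.
  have := le_INR _ _ (elimT leP hc); rewrite mult_INR => h; nra.
Qed.

Theorem corollary3p3 (n m : nat) (alpha : R) :
  (2 <= n)%N -> (1 <= m)%N -> (m <= n - 1)%N ->
  (INR m < alpha)%R -> (alpha < INR (m * (n - m)))%R ->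
  exists C : R, (0 < C)%R /\
    forall p : nat, prime p ->
      exists G : seq {vspace 'rV['F_p]_n},
        is_subset_Grassmannian (n - m) G /\
        (Rpower (INR p) alpha <= C * INR (size G))%R /\
        (INR (size G) <= C * Rpower (INR p) alpha)%R /\
        forall xi : 'rV['F_p]_n, xi != GRing.zero ->
          (INR (count_containing G xi) <= C * INR (size G) * Rpower (INR p) (- INR m))%R.
Proof.
move=> hn hm hmn ha1 ha2.
have hmn' : (m < n)%N.
  apply: (leq_ltn_trans hmn); rewrite subn1 ltn_predL; exact: leq_trans hn.
have [k' hk] : exists k', n = (k'.+1 + m)%N.
  by exists (n - m).-1; rewrite prednK ?subn_gt0 // subnK // ltnW.
subst n; rewrite addnK in ha2 *.
exists (2 + INR (expn k'.+1 m))%R; split.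
  have := pos_INR (expn k'.+1 m); lra.
move=> p pp.
have hp2 : (2 <= p)%N := prime_gt1 pp.
have ha2' : (alpha < INR m + INR (k' * m))%R.
  have e : INR (m * k'.+1) = (INR m + INR (k' * m))%R.
    by rewrite -plus_INR; congr INR; rewrite mulnS mulnC.
  by rewrite -e.
have [N [hN [h1 [h2 h3]]]] := real_part (expn k'.+1 m) hp2 ha1 ha2'.
have hNF : (N <= expn #|'F_p| (k' * m))%N by rewrite card_Fp // expn_pow.
have [G [uG aG sG cG]] := core hNF.
rewrite -!expn_pow in h1 h2 h3.
exists G; rewrite sG card_Fp //; split; first by rewrite /is_subset_Grassmannian uG.
split; first exact: h1.
split; first exact: h2.
by move=> xi xnz; apply: h3; apply: cG.
Qed.
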